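(* Let $m,n$ be even positive integers and let $\mathcal{X}_0,\mathcal{X}_1\subseteq\{0,1\}^{2mn}$ be as in the context. There exists a real multilinear polynomial $p$ in $2mn$ variables of degree $\min(n/2,m/2)+1$ such that $p(x)\neq 0$ for all $x\in\mathcal{X}_1$ and $p(x)=0$ for all $x\in\mathcal{X}_0$. More precisely, there is such a polynomial of degree $n/2+1$ (with $p>0$ on $\mathcal{X}_1$) and there is such a polynomial of degree $m/2+1$ (with $p=n/2$ on $\mathcal{X}_1$).
   Context: For $z\in\{0,1\}^k$ let $w(z)$ denote its Hamming weight. Let $\mathcal{A}_1=\{0^m y : y\in\{0,1\}^m,\ m/2\le w(y)\le m\}$ and $\mathcal{A}_0=\{y0^m : y\in\{0,1\}^m,\ m/2\le w(y)\le m\}$ (subsets of $\{0,1\}^{2m}$). A string $x\in\{0,1\}^{2mn}$ is viewed as $n$ consecutive blocks of $2m$ bits, each block being $x^{(0,i)}x^{(1,i)}$ with $x^{(0,i)},x^{(1,i)}\in\{0,1\}^m$, $i=1,\dots,n$. Define $\mathcal{X}_1=\mathcal{A}_0\times\cdots\times\mathcal{A}_0$ ($n$ factors) and $\mathcal{X}_0=\bigcup\{\mathcal{A}_{y_1}\times\cdots\times\mathcal{A}_{y_n} : y\in\{0,1\}^n,\ w(y)=n/2\}$. A multilinear polynomial is $p(x)=\sum_{S\subseteq[N]}a_S\prod_{i\in S}x_i$ with real $a_S$; its degree is $\max\{|S|: a_S\neq 0\}$. *)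

(* Defs.v *)
From HB Require Import structures.
From mathcomp Require Import all_boot all_order all_algebra.
From mathcomp Require Import Rstruct.
From Stdlib Require Import Rdefinitions.
Set Implicit Arguments. Unset Strict Implicit. Unset Printing Implicit Defensive.
Import Order.TTheory GRing.Theory Num.Theory.
Local Open Scope ring_scope.

(* Real multilinear polynomial in N variables x_0..x_{N-1}: its coefficient
   family (a_S)_{S subset [N]}. *)
Definition mlpoly (N : nat) := {ffun {set 'I_N} -> Rdefinitions.R}.

Definition mleval (N : nat) (p : mlpoly N) (x : 'I_N -> bool) : Rdefinitions.R :=
  \sum_(S : {set 'I_N}) p S * \prod_(i in S) ((x i)%:R : Rdefinitions.R).

Definition mldeg (N : nat) (p : mlpoly N) : nat :=
  (\max_(S : {set 'I_N} | p S != 0%R) #|S|)%nat.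

(* bit number k (0-based) of x, false if out of range *)
Definition bit (N : nat) (x : 'I_N -> bool) (k : nat) : bool :=
  if (insub k : option 'I_N) is Some o then x o else false.

(* Hamming weight of x^{(b,i)} (b = 0 or 1, i 0-based block index):
   bits 2m*i + b*m + j, j < m. *)
Definition halfw (m N : nat) (x : 'I_N -> bool) (i : nat) (b : bool) : nat :=
  (\sum_(j < m) nat_of_bool (bit x (2 * m * i + b * m + j)))%nat.

(* block i of x lies in A_c :  A_1 = 0^m y, A_0 = y 0^m, with m/2 <= w(y) <= m *)
Definition inA (m N : nat) (c : bool) (x : 'I_N -> bool) (i : nat) : bool :=
  [&& halfw m x i (~~ c) == 0%nat, leq (m./2) (halfw m x i c) & leq (halfw m x i c) m].

Definition X1 (m n : nat) (x : 'I_(2 * m * n) -> bool) : Prop :=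
  forall i : 'I_n, inA m false x i.

Definition X0 (m n : nat) (x : 'I_(2 * m * n) -> bool) : Prop :=
  exists y : 'I_n -> bool,
    #|[set i | y i]| = n./2 /\ forall i : 'I_n, inA m (y i) x i.

(* Main.v *)
Require Import Defs.
From HB Require Import structures.
From mathcomp Require Import all_boot all_order all_algebra.
From mathcomp Require Import Rstruct.
From Stdlib Require Import Rdefinitions.
From mathcomp Require Import zify.
Set Implicit Arguments. Unset Strict Implicit. Unset Printing Implicit Defensive.
Import Order.TTheory GRing.Theory Num.Theory.
Local Open Scope ring_scope.

Local Notation RR := Rdefinitions.R.

Definition rep (N D : nat) (g : ('I_N -> bool) -> RR) :=
  exists p : mlpoly N, (forall S, p S != 0 -> (#|S| <= D)%nat) /\ forall x, mleval p x = g x.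
Arguments rep : clear implicits.

Lemma prodb N (x : 'I_N -> bool) (S : {set 'I_N}) :
  \prod_(i in S) ((x i)%:R : RR) = ((S \subset [set i | x i]) : nat)%:R.
Proof.
case: (boolP (S \subset [set i | x i])) => H.
  by rewrite big1 // => i iS; move: (subsetP H i iS); rewrite inE => ->.
case/subsetPn: H => i iS; rewrite inE => /negbTE xi.
by rewrite (bigD1 i) //= xi mul0r.
Qed.

Lemma rep_ext N D g h : (forall x, g x = h x) -> rep N D g -> rep N D h.
Proof. by move=> E [p [Hd He]]; exists p; split => // x; rewrite He. Qed.

Lemma rep_mono N D D' g : (D <= D')%nat -> rep N D g -> rep N D' g.
Proof. by move=> le [p [Hd He]]; exists p; split => // S h; exact: (leq_trans (Hd S h) le). Qed.

Lemma rep_const N (c : RR) : rep N 0 (fun _ => c).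
Proof.
exists [ffun S => if S == set0 then c else 0]; split.
  move=> S; rewrite ffunE; case: (eqVneq S set0) => [-> _|_]; [by rewrite cards0 | by rewrite eqxx].
move=> x; rewrite /mleval (bigD1 set0) //= ffunE eqxx big_set0 mulr1.
rewrite big1 ?addr0 // => S /negbTE; rewrite ffunE => ->; by rewrite mul0r.
Qed.

Lemma rep_var N (i : 'I_N) : rep N 1 (fun x => ((x i)%:R : RR)).
Proof.
exists [ffun S => if S == [set i] then 1 else 0]; split.
  move=> S; rewrite ffunE; case: (eqVneq S [set i]) => [-> _|_]; [by rewrite cards1 | by rewrite eqxx].
move=> x; rewrite /mleval (bigD1 [set i]) //= ffunE eqxx big_set1 mul1r.
rewrite big1 ?addr0 // => S /negbTE; rewrite ffunE => ->; by rewrite mul0r.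
Qed.

Lemma rep_bit N k : rep N 1 (fun x => ((bit x k)%:R : RR)).
Proof.
rewrite /bit; case: (insub k : option 'I_N) => [o|].
  exact: rep_var.
apply: rep_mono (rep_ext _ (rep_const N 0)) => // x.
Qed.

Lemma rep_add N D1 D2 g h : rep N D1 g -> rep N D2 h -> rep N (maxn D1 D2) (fun x => g x + h x).
Proof.
move=> [p [Hp Ep]] [q [Hq Eq]].
exists [ffun S => p S + q S]; split.
  move=> S; rewrite ffunE => H.
  case: (eqVneq (p S) 0) => [p0|/Hp]; last by move=> le; rewrite leq_max le.
  by move: H; rewrite p0 add0r => /Hq le; rewrite leq_max le orbT.
move=> x; rewrite -Ep -Eq /mleval -big_split /=; apply: eq_bigr => S _.
by rewrite ffunE mulrDl.
Qed.

Lemma rep_mul N D1 D2 g h : rep N D1 g -> rep N D2 h -> rep N (D1 + D2) (fun x => g x * h x).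
Proof.
move=> [p [Hp Ep]] [q [Hq Eq]].
exists [ffun U => \sum_S \sum_T (if S :|: T == U then p S * q T else 0)]; split.
  move=> U; rewrite ffunE; case: leqP => // HU; move=> /eqP H; exfalso; apply: H.
  apply: big1 => S _; apply: big1 => T _.
  case: eqP => // E.
  case: (eqVneq (p S) 0) => [->|/Hp lS]; first by rewrite mul0r.
  case: (eqVneq (q T) 0) => [->|/Hq lT]; first by rewrite mulr0.
  exfalso; move: HU; rewrite -E cardsU; lia.
move=> x; rewrite -Ep -Eq /mleval big_distrlr /=.
transitivity (\sum_U \sum_S \sum_T (if S :|: T == U then p S * q T else 0) * \prod_(i in U) ((x i)%:R : RR)).
  apply: eq_bigr => U _; rewrite ffunE mulr_suml; apply: eq_bigr => S _; by rewrite mulr_suml.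
rewrite exchange_big; apply: eq_bigr => S _; rewrite exchange_big; apply: eq_bigr => T _.
rewrite (bigD1 (S :|: T)) //= eqxx.
rewrite [X in _ + X]big1 ?addr0; last first.
  by move=> U; rewrite eq_sym => /negbTE ->; rewrite mul0r.
by rewrite !prodb subUset -mulnb natrM mulrACA.
Qed.

Lemma rep_scale N D (c : RR) g : rep N D g -> rep N D (fun x => c * g x).
Proof. move=> H; exact: rep_mul (rep_const N c) H. Qed.

Lemma rep_sum N D (I : Type) (r : seq I) (F : I -> ('I_N -> bool) -> RR) :
  (forall i, rep N D (F i)) -> rep N D (fun x => \sum_(i <- r) F i x).
Proof.
move=> HF; elim: r => [|a r IH].
  have := rep_mono (leq0n D) (rep_const N 0); apply: rep_ext => x; by rewrite big_nil.
have := rep_add (HF a) IH; rewrite maxnn; apply: rep_ext => x; by rewrite big_cons.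
Qed.

Lemma rep_prod N D (I : Type) (r : seq I) (F : I -> ('I_N -> bool) -> RR) :
  (forall i, rep N D (F i)) -> rep N (D * size r) (fun x => \prod_(i <- r) F i x).
Proof.
move=> HF; elim: r => [|a r IH].
  rewrite /= muln0; have := rep_const N 1; apply: rep_ext => x; by rewrite big_nil.
rewrite /= mulnS; have := rep_mul (HF a) IH; apply: rep_ext => x; by rewrite big_cons.
Qed.

Lemma rep_halfw m N i b : rep N 1 (fun x => ((halfw m x i b)%:R : RR)).
Proof.
have := @rep_sum N 1 _ (index_enum 'I_m) (fun j x => ((bit x (2 * m * i + b * m + j))%:R : RR))
  (fun j => rep_bit N _).
apply: rep_ext => x; by rewrite /halfw natr_sum.
Qed.

Lemma card_lt N k : (k <= N)%nat -> #|[set i : 'I_N | (i < k)%nat]| = k.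
Proof.
move=> kN.
have -> : [set i : 'I_N | (i < k)%nat] = widen_ord kN @: [set: 'I_k].
  apply/setP => i; rewrite inE; apply/idP/imsetP => [ik|[j _ ->]] /=; last exact: ltn_ord.
  by exists (Ordinal ik); [rewrite inE | apply: val_inj].
rewrite card_imset ?cardsT ?card_ord //.
by move=> a b /(congr1 val) /= ab; apply: val_inj.
Qed.

Lemma bitE N (x : 'I_N -> bool) (o : 'I_N) : bit x o = x o.
Proof. by rewrite /bit valK. Qed.

Lemma pad N m D g : (0 < m)%nat -> (m < N)%nat -> (1 < D)%nat -> (D.-1 < N)%nat -> rep N D g ->
  exists p : mlpoly N, mldeg p = D /\ forall x, ~~ (bit x 0 && bit x m) -> mleval p x = g x.
Proof.
move=> m0 mN D1 DN [p [Hp Ep]].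
have mxN : (maxn m D.-1 < N)%nat by rewrite gtn_max mN.
pose om' : 'I_N := Ordinal mxN.
pose S0 := om' |: [set i : 'I_N | (i < D.-1)%nat].
have cS0 : #|S0| = D.
  rewrite cardsU1 card_lt; last exact: ltnW.
  rewrite inE /= -leqNgt leq_maxr add1n prednK //; exact: ltnW.
have N0 : (0 < N)%nat by lia.
pose o0 : 'I_N := Ordinal N0.
pose om : 'I_N := Ordinal mN.
have o0S : o0 \in S0 by rewrite !inE /=; apply/orP; right; lia.
have omS : om \in S0.
  rewrite !inE; case: (ltnP m D.-1) => h; first by rewrite orbT.
  apply/orP; left; apply/eqP; apply: val_inj => /=; lia.
exists [ffun S => if S == S0 then 1 else p S]; split.
  apply/eqP; rewrite eqn_leq; apply/andP; split.
    apply/bigmax_leqP => S; rewrite ffunE; case: (eqVneq S S0) => [-> _|_ /Hp //].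
    by rewrite cS0.
  rewrite /mldeg -{1}cS0; apply: leq_bigmax_cond.
  by rewrite ffunE eqxx oner_neq0.
move=> x Hx.
have b0 : bit x 0 = x o0 := bitE x o0.
have bm : bit x m = x om := bitE x om.
have P0 : \prod_(i in S0) ((x i)%:R : RR) = 0.
  rewrite prodb; suff -> : (S0 \subset [set i | x i]) = false by [].
  apply/negbTE/negP => /subsetP sub.
  move: Hx; have := sub _ o0S; have := sub _ omS; rewrite !inE b0 bm => -> ->; done.
rewrite -Ep /mleval (bigD1 S0) //= [in RHS](bigD1 S0) //= P0 !mulr0 !add0r.
apply: eq_bigr => S /negbTE nS; by rewrite ffunE nS.
Qed.

Lemma inA0 m n (x : 'I_(2 * m * n) -> bool) c :
  (0 < m)%nat -> inA m c x 0 -> ~~ (bit x 0 && bit x m).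
Proof.
move=> m0 /and3P [/eqP H _ _].
have key : forall b, halfw m x 0 b = 0%nat -> bit x (b * m) = false.
  move=> b; rewrite /halfw (bigD1 (Ordinal m0)) //= => /eqP; rewrite addn_eq0 => /andP [/eqP].
  rewrite muln0 add0n addn0. by case: (bit x _).
case: c H => /key /=; rewrite ?mul1n ?mul0n => ->; by rewrite ?andbF.
Qed.

Definition rf m (v : RR) := 1 - \prod_(k <- iota (m./2) (m./2).+1) (1 - v / k%:R).

Lemma rep_rf N m D g : rep N D g -> rep N (D * (m./2).+1) (fun x => rf m (g x)).
Proof.
move=> H.
have Hf : forall k : nat, rep N D (fun x => 1 + (- (k%:R)^-1) * g x).
  move=> k; have := rep_add (rep_const N 1) (rep_scale (- (k%:R)^-1) H); by rewrite max0n.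
have := rep_add (rep_const N 1) (rep_scale (-1) (rep_prod (iota (m./2) (m./2).+1) Hf)).
rewrite max0n size_iota; apply: rep_ext => x.
rewrite /rf mulN1r; congr (_ - _); apply: eq_bigr => k _; by rewrite mulNr mulrC.
Qed.

Lemma rf0 m : rf m 0 = 0.
Proof. rewrite /rf big1 => [|k _]; [by rewrite subrr | by rewrite mul0r subr0]. Qed.

Lemma rf1 m k : (m./2 * 2 = m)%nat -> (0 < m./2)%nat -> (m./2 <= k <= m)%nat -> rf m k%:R = 1.
Proof.
move=> em m2 /andP [a b].
have k0 : (k%:R : RR) != 0 by rewrite pnatr_eq0; lia.
rewrite /rf (big_rem k); last by rewrite mem_iota; apply/andP; split; lia.
by rewrite /= divff // subrr mul0r subr0.
Qed.

Theorem mainTheorem2 (m n : nat) :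
  (0 < m)%nat -> (0 < n)%nat -> ~~ odd m -> ~~ odd n ->
  [/\ (exists p : mlpoly (2 * m * n),
         mldeg p = (minn (n./2) (m./2)).+1 /\
         (forall x, X1 x -> mleval p x != 0) /\
         (forall x, X0 x -> mleval p x = 0)),
      (exists p : mlpoly (2 * m * n),
         mldeg p = (n./2).+1 /\
         (forall x, X1 x -> 0 < mleval p x) /\
         (forall x, X0 x -> mleval p x = 0)) &
      (exists p : mlpoly (2 * m * n),
         mldeg p = (m./2).+1 /\
         (forall x, X1 x -> mleval p x = (n./2)%:R) /\
         (forall x, X0 x -> mleval p x = 0))].
Proof.
move=> m0 n0 om on.
have em := odd_double_half m; rewrite (negbTE om) add0n -muln2 in em.
have en := odd_double_half n; rewrite (negbTE on) add0n -muln2 in en.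
have mN : (m < 2 * m * n)%nat by nia.
have n2 : (0 < n./2)%nat by lia.
have m2 : (0 < m./2)%nat by lia.
have xgood : forall x : 'I_(2 * m * n) -> bool, (X1 x \/ X0 x) -> ~~ (bit x 0 && bit x m).
  move=> x [H|[y [_ H]]].
    exact: (inA0 m0 (H (Ordinal n0))).
  exact: (inA0 m0 (H (Ordinal n0))).
have rep2 : rep (2 * m * n) (n./2).+1
    (fun x => \prod_(i <- iota 0 (n./2).+1) ((halfw m x i false)%:R : RR)).
  have := rep_prod (iota 0 (n./2).+1) (fun i => rep_halfw m (2 * m * n) i false).
  by rewrite size_iota mul1n.
have D2a : (1 < (n./2).+1)%nat by lia.
have D2b : ((n./2).+1.-1 < 2 * m * n)%nat by rewrite /=; nia.
have [p2 [d2 e2]] := pad m0 mN D2a D2b rep2.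
have pos2 : forall x, X1 x -> 0 < mleval p2 x.
  move=> x X; rewrite e2; last by apply: xgood; left.
  rewrite big_seq; apply: prodr_gt0 => i; rewrite mem_iota => /andP [_ hi].
  have iN : (i < n)%nat by lia.
  have /and3P [_ h1 _] := X (Ordinal iN).
  rewrite ltr0n; exact: leq_trans m2 h1.
have zero2 : forall x, X0 x -> mleval p2 x = 0.
  move=> x X; rewrite e2; last by apply: xgood; right.
  case: X => y [cy Hy].
  case: (boolP [exists i : 'I_n, ((i < (n./2).+1)%nat && y i)]) =>
      [/existsP [i /andP [ilt yi]] | /existsPn Hno].
    rewrite (big_rem (val i)); last by rewrite mem_iota add0n ilt.
    have h0 : halfw m x i false = 0%nat.
      by have /and3P [/eqP h _ _] := Hy i; move: h; rewrite yi.
    by rewrite /= h0 mulr0n mul0r.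
  exfalso.
  have sub : [set i : 'I_n | (i < (n./2).+1)%nat] \subset ~: [set i | y i].
    apply/subsetP => i; rewrite !inE => ilt; move: (Hno i); by rewrite ilt.
  have c1 := subset_leq_card sub; rewrite card_lt in c1; last lia.
  have c2 := cardsC [set i | y i]; rewrite cy card_ord in c2; lia.
have rep3 : rep (2 * m * n) (m./2).+1
    (fun x => (n./2)%:R - \sum_(i < n) rf m ((halfw m x i true)%:R)).
  have Hi : forall i : 'I_n, rep (2 * m * n) (m./2).+1 (fun x => rf m ((halfw m x i true)%:R)).
    move=> i; have := rep_rf m (rep_halfw m (2 * m * n) i true); by rewrite mul1n.
  have := rep_add (rep_const (2 * m * n) ((n./2)%:R)) (rep_scale (-1) (rep_sum (index_enum 'I_n) Hi)).
  rewrite max0n; apply: rep_ext => x; by rewrite mulN1r.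
have D3a : (1 < (m./2).+1)%nat by lia.
have D3b : ((m./2).+1.-1 < 2 * m * n)%nat by rewrite /=; nia.
have [p3 [d3 e3]] := pad m0 mN D3a D3b rep3.
have val3 : forall x, X1 x -> mleval p3 x = (n./2)%:R.
  move=> x X; rewrite e3; last by apply: xgood; left.
  rewrite big1 ?subr0 // => i _.
  have h0 : halfw m x i true = 0%nat by have /and3P [/eqP h _ _] := X i; exact: h.
  by rewrite h0 mulr0n rf0.
have zero3 : forall x, X0 x -> mleval p3 x = 0.
  move=> x X; rewrite e3; last by apply: xgood; right.
  case: X => y [cy Hy].
  rewrite (eq_bigr (fun i => ((y i : nat)%:R : RR))); last first.
    move=> i _; have := Hy i; case: (y i) => /and3P [/eqP h0 a b].
      by rewrite (rf1 em m2) // a b.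
    have h0' : halfw m x i true = 0%nat := h0.
    by rewrite h0' mulr0n rf0.
  rewrite -natr_sum.
  have -> : (\sum_(i < n) (y i : nat))%nat = #|[set i | y i]|.
    rewrite -sum1_card [RHS]big_mkcond /=; apply: eq_bigr => i _; rewrite inE; by case: (y i).
  by rewrite cy subrr.
split.
- case: (leqP (n./2) (m./2)) => h.
    exists p2; split => //; split => x X.
      exact: lt0r_neq0 (pos2 x X).
    exact: zero2 x X.
  exists p3; split => //; split => x X.
    by rewrite val3 // pnatr_eq0; lia.
  exact: zero3 x X.
- by exists p2.
- by exists p3.
Qed.
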